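(* Let $n\ge1$, $r\ge1$, let $R,D\subseteq\{1,\dots,n-1\}$ and $\sigma\in S_n$. Then $$(q_r;q_r)_n\sum_{\substack{Z\in(\mathbb{N}^r)^n\\ \sigma_R(Z)=\sigma}} q^Z\,\chi\!\left(\mathrm{Des}_{R,Z^{(2)}}(\sigma)=D\right)=q_r^{c(D)}\sum_{\substack{S\in(\mathbb{N}^{r-1})^n\\ \mathrm{Des}_{R,S}(\sigma)=D}} q^S,$$ where $c(D)=\sum_{i\in D}(n-i)$.
   Context: $\mathbb{N}=\{0,1,\dots\}$; sequences in $\mathbb{N}^r$ are compared lexicographically (first differing coordinate decides). $(q;t)_r=(1-q)(1-qt)\cdots(1-qt^{r-1})$; $\chi(A)$ is $1$ if $A$ holds and $0$ otherwise. For $R\subseteq\{1,\dots,n-1\}$ and distinct $a,b\in\{1,\dots,n\}$, write $a\sim_R b$ if all of $\min(a,b),\dots,\max(a,b)-1$ lie in $R$. For $S=(s^1,\dots,s^n)\in(\mathbb{N}^r)^n$, the reading order on indices: $i$ is read before $j$ if $s^i<s^j$, or if $s^i=s^j$ and either ($i<j$ and not $i\sim_R j$) or ($i>j$ and $i\sim_R j$); $\sigma_R(S)\in S_n$ is the permutation $\sigma_1\cdots\sigma_n$ listing the indices in this reading order. For $Z=(z^1,\dots,z^n)\in(\mathbb{N}^r)^n$ with $z^j=(z^j_1,\dots,z^j_r)$, $q^Z=\prod_{i=1}^r q_{r-i+1}^{z^1_i+\cdots+z^n_i}$, and $Z^{(2)}\in(\mathbb{N}^{r-1})^n$ is obtained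 by deleting the first coordinate of every $z^j$. For $S=(s^1,\dots,s^n)\in(\mathbb{N}^{r'})^n$ (if $r'=0$, all $s^i$ are empty and equal) and $\sigma\in S_n$, $\mathrm{Des}_{R,S}(\sigma)$ is the set of $i\in\{1,\dots,n-1\}$ with either $s^{\sigma_i}>s^{\sigma_{i+1}}$, or $s^{\sigma_i}=s^{\sigma_{i+1}}$ and either ($\sigma_{i+1}<\sigma_i$ and not $\sigma_{i+1}\sim_R\sigma_i$) or ($\sigma_{i+1}>\sigma_i$ and $\sigma_i\sim_R\sigma_{i+1}$). *)

(* Defs.v *)
From HB Require Import structures.
From mathcomp Require Import all_boot all_order all_algebra all_fingroup.
Set Implicit Arguments. Unset Strict Implicit. Unset Printing Implicit Defensive.
Import GRing.Theory.
Local Open Scope nat_scope.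

(* Conventions.
   - Indices 1..n are represented by i : 'I_n, standing for i.+1.
   - R, D subsets of {1,..,n-1} are represented by {set 'I_n} whose elements
     (as naturals) are the members; the hypothesis "every element is > 0"
     expresses R, D ⊆ {1,..,n-1}.
   - A vector of N^r' is a seq nat of size r'; a family S = (s^1,...,s^n)
     is a function 'I_n -> seq nat (s^(i+1) = S i).
   - Formal power series in q_1,...,q_r with integer coefficients are
     represented by their coefficient functions: a monomial
     q_1^(e 1) ... q_r^(e r) is given by e : nat -> nat (only the values at
     1..r matter). *)

Definition inR n (R : {set 'I_n}) (k : nat) : bool :=
  [exists i : 'I_n, (val i == k) && (i \in R)].

Definition simR n (R : {set 'I_n}) (a b : nat) : bool :=
  (a != b) && all (inR R) (iota (minn a b) (maxn a b - minn a b)).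

Fixpoint lexlt (s t : seq nat) : bool :=
  match s, t with
  | x :: s', y :: t' => (x < y) || ((x == y) && lexlt s' t')
  | _, _ => false
  end.

Definition read_before n (R : {set 'I_n}) (S : 'I_n -> seq nat) (i j : 'I_n) : bool :=
  lexlt (S i) (S j) ||
  ((S i == S j) &&
   (((i < j) && ~~ simR R i.+1 j.+1) || ((j < i) && simR R i.+1 j.+1))).

(* sigma_R(S) = sigma : the word sigma_1 ... sigma_n lists the indices
   in reading order *)
Definition reading_perm_is n (R : {set 'I_n}) (S : 'I_n -> seq nat)
    (sigma : {perm 'I_n}) : bool :=
  sorted (read_before R S) [seq sigma i | i <- enum 'I_n].

Definition prev_ord n (p : 'I_n) : 'I_n :=
  Ordinal (leq_ltn_trans (leq_pred p) (ltn_ord p)).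

(* Des_{R,S}(sigma) ⊆ {1..n-1}; position p (1 <= p <= n-1) is the ordinal
   p : 'I_n, with sigma_p = sigma (p-1) and sigma_{p+1} = sigma p. *)
Definition Des n (R : {set 'I_n}) (S : 'I_n -> seq nat) (sigma : {perm 'I_n})
    : {set 'I_n} :=
  [set p : 'I_n | (0 < p) &&
     (let a := sigma (prev_ord p) in let b := sigma p in
      lexlt (S b) (S a) ||
      ((S a == S b) &&
       (((b < a) && ~~ simR R a.+1 b.+1) || ((a < b) && simR R a.+1 b.+1))))].

Definition Zdrop2 n (Z : 'I_n -> seq nat) : 'I_n -> seq nat :=
  fun j => behead (Z j).

(* exponent of q_v in q^Z for Z in (N^r')^n:  q^Z = prod_{i=1}^{r'}
   q_{r'-i+1}^{z^1_i+...+z^n_i}, so q_v gets the (r'-v+1)-th coordinate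
   (0-based index r'-v); q_v does not occur if v = 0 or v > r'. *)
Definition wt n (r' : nat) (Z : 'I_n -> seq nat) (v : nat) : nat :=
  if (1 <= v <= r') then \sum_(j < n) nth 0 (Z j) (r' - v) else 0.

Definition series := (nat -> nat) -> int.

(* Coefficient of the monomial e (in variables q_1..q_r) of the generating
   function  sum_{Z in (N^r')^n, P Z} q^Z.  Every Z contributing to this
   coefficient has all entries <= B := e 1 + ... + e r, so the count is over
   the finite set of families with entries in {0..B}. *)
Definition gf (r n r' : nat) (P : ('I_n -> seq nat) -> bool) : series :=
  fun e =>
    let B := (\sum_(1 <= v < r.+1) e v)%N in
    (#|[pred Z : {ffun 'I_n -> {ffun 'I_r' -> 'I_B.+1}} |
        let Zn := fun j => [seq val (Z j k) | k <- enum 'I_r'] in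
        P Zn && [forall v : 'I_r, wt r' Zn v.+1 == e v.+1]]|)%:Z%R.

Definition upd (e : nat -> nat) (k m : nat) : nat -> nat :=
  fun j => if j == k then m else e j.

(* product of a polynomial p(q_k) in the single variable q_k with F *)
Definition mul_poly_var (k : nat) (p : {poly int}) (F : series) : series :=
  fun e => (\sum_(m < (e k).+1) p`_m * F (upd e k (e k - m)))%R.

Definition mul_mono_var (k c : nat) (F : series) : series :=
  fun e => if (c <= e k)%N then F (upd e k (e k - c)) else 0%R.

Definition qpoch (n : nat) : {poly int} := (\prod_(i < n) (1 - 'X^(i.+1)) : {poly int})%R.

Definition cD n (D : {set 'I_n}) : nat := (\sum_(i in D) (n - i))%N.

(* Main.v *)
Require Import Defs.
From HB Require Import structures.
From mathcomp Require Import all_boot all_order all_algebra all_fingroup.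
From Stdlib Require Import FunctionalExtensionality.
From mathcomp Require Import zify.
Set Implicit Arguments. Unset Strict Implicit. Unset Printing Implicit Defensive.
Import GRing.Theory.

Lemma lexlt_total s t : size s = size t -> lexlt s t = ~~ lexlt t s && (s != t).
Proof.
elim: s t => [|x s IH] [|y t] //= [Hs].
rewrite IH // eqseq_cons.
case: (ltngtP x y) => Hxy //=.
Qed.

Lemma card_bound1 (I : finType) (Q : (I -> nat) -> bool) M B :
  M <= B ->
  (forall f : {ffun I -> 'I_B.+1}, Q (fun i => val (f i)) -> forall i, val (f i) <= M) ->
  #|[pred f : {ffun I -> 'I_B.+1} | Q (fun i => val (f i))]| =
  #|[pred f : {ffun I -> 'I_M.+1} | Q (fun i => val (f i))]|.
Proof.
move=> hMB hQ.
have hMB' : M.+1 <= B.+1 by [].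
pose w (f : {ffun I -> 'I_M.+1}) : {ffun I -> 'I_B.+1} := [ffun i => widen_ord hMB' (f i)].
have wv f : (fun i => val (w f i)) = (fun i => val (f i)).
  by apply: functional_extensionality => i; rewrite ffunE.
rewrite -(card_in_imset (f := w)); last first.
  move=> f1 f2 _ _ H; apply/ffunP => i; apply: val_inj.
  by have := congr1 (fun g : {ffun I -> 'I_B.+1} => val (g i)) H; rewrite /= !ffunE.
apply: eq_card => g; rewrite inE; apply/idP/imsetP.
- move=> Hg; exists [ffun i => inord (val (g i)) : 'I_M.+1].
    rewrite inE.
    have -> : (fun i => val ([ffun i => inord (val (g i)) : 'I_M.+1] i)) = (fun i => val (g i)) => //.
    by apply: functional_extensionality => i; rewrite ffunE /= inordK // ltnS hQ.
  apply/ffunP => i; apply: val_inj; rewrite !ffunE /= inordK // ltnS hQ //.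
- by case=> f; rewrite inE => Hf ->; rewrite wv.
Qed.

Lemma card_bound2 (I J : finType) (Q : (I -> J -> nat) -> bool) M B :
  M <= B ->
  (forall f : {ffun I -> {ffun J -> 'I_B.+1}}, Q (fun i j => val (f i j)) -> forall i j, val (f i j) <= M) ->
  #|[pred f : {ffun I -> {ffun J -> 'I_B.+1}} | Q (fun i j => val (f i j))]| =
  #|[pred f : {ffun I -> {ffun J -> 'I_M.+1}} | Q (fun i j => val (f i j))]|.
Proof.
move=> hMB hQ.
have hMB' : M.+1 <= B.+1 by [].
pose w (f : {ffun I -> {ffun J -> 'I_M.+1}}) : {ffun I -> {ffun J -> 'I_B.+1}} :=
  [ffun i => [ffun j => widen_ord hMB' (f i j)]].
have wv f : (fun i j => val (w f i j)) = (fun i j => val (f i j)).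
  by apply: functional_extensionality => i; apply: functional_extensionality => j; rewrite !ffunE.
rewrite -(card_in_imset (f := w)); last first.
  move=> f1 f2 _ _ H; apply/ffunP => i; apply/ffunP => j; apply: val_inj.
  by have := congr1 (fun g : {ffun I -> {ffun J -> 'I_B.+1}} => val (g i j)) H; rewrite /= !ffunE.
apply: eq_card => g; rewrite inE; apply/idP/imsetP.
- move=> Hg; exists [ffun i => [ffun j => inord (val (g i j)) : 'I_M.+1]].
    rewrite inE.
    have -> : (fun i j => val ([ffun i => [ffun j => inord (val (g i j)) : 'I_M.+1]] i j)) = (fun i j => val (g i j)) => //.
    by apply: functional_extensionality => i; apply: functional_extensionality => j; rewrite !ffunE /= inordK // ltnS hQ.
  apply/ffunP => i; apply/ffunP => j; apply: val_inj; rewrite !ffunE /= inordK // ltnS hQ //.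
- by case=> f; rewrite inE => Hf ->; rewrite wv.
Qed.

Lemma card_reindex (T U : finType) (h : U -> T) (A : pred T) :
  bijective h -> #|[pred x | A x]| = #|[pred y | A (h y)]|.
Proof.
move=> hb; rewrite -!sum1_card (reindex h) //; exact: onW_bij.
Qed.

Lemma card_split n r' B (P : ('I_n -> seq nat) -> bool) :
 #|[pred Z : {ffun 'I_n -> {ffun 'I_r'.+1 -> 'I_B.+1}} | P (fun j => [seq val (Z j i) | i <- enum 'I_r'.+1])]|
 = #|[pred p : {ffun 'I_n -> 'I_B.+1} * {ffun 'I_n -> {ffun 'I_r' -> 'I_B.+1}} |
       P (fun j => val (p.1 j) :: [seq val (p.2 j i) | i <- enum 'I_r'])]|.
Proof.
pose psi (p : {ffun 'I_n -> 'I_B.+1} * {ffun 'I_n -> {ffun 'I_r' -> 'I_B.+1}})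
  : {ffun 'I_n -> {ffun 'I_r'.+1 -> 'I_B.+1}} :=
  [ffun j => [ffun i => match unlift ord0 i with None => p.1 j | Some i' => p.2 j i' end]].
pose phi (Z : {ffun 'I_n -> {ffun 'I_r'.+1 -> 'I_B.+1}}) :
  {ffun 'I_n -> 'I_B.+1} * {ffun 'I_n -> {ffun 'I_r' -> 'I_B.+1}} :=
  ([ffun j => Z j ord0], [ffun j => [ffun i => Z j (lift ord0 i)]]).
have hb : bijective psi.
  exists phi.
  - case=> a T; rewrite /phi /psi /=; congr pair; apply/ffunP => j; rewrite !ffunE.
      by rewrite unlift_none.
    apply/ffunP => i; by rewrite !ffunE liftK.
  - move=> Z; apply/ffunP => j; apply/ffunP => i; rewrite /psi /phi !ffunE /=.
    case: unliftP => [i'|] -> /=; by rewrite ?ffunE.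
rewrite (card_reindex _ hb); apply: eq_card => p; rewrite !inE.
have -> : (fun j => [seq val (psi p j i) | i <- enum 'I_r'.+1]) =
          (fun j => val (p.1 j) :: [seq val (p.2 j i) | i <- enum 'I_r']) => //.
apply: functional_extensionality => j.
rewrite enum_ordSl /= /psi !ffunE unlift_none -map_comp; congr cons.
apply: eq_map => i /=; by rewrite !ffunE liftK.
Qed.

Definition adjD n (D : {set 'I_n}) (f : 'I_n -> nat) : bool :=
  [forall p : 'I_n, (0 < p) ==> (f (prev_ord p) + (p \in D) <= f p)].
Definition psum n (D : {set 'I_n}) (b : 'I_n -> nat) (p : 'I_n) : nat :=
  \sum_(i : 'I_n | i <= p) (b i + (i \in D)).
Definition dif n (D : {set 'I_n}) (a : 'I_n -> nat) (p : 'I_n) : nat :=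
  a p - (if 0 < p then a (prev_ord p) else 0) - (p \in D).

Lemma psum0 n (D : {set 'I_n}) b (p : 'I_n) : val p = 0 -> psum D b p = b p + (p \in D).
Proof.
move=> hp; rewrite /psum (bigD1 p) //= big_pred0 ?addn0 // => i.
apply/negbTE; rewrite negb_and negbK -val_eqE /= hp leqn0; by case: (val i == 0).
Qed.

Lemma psumS n (D : {set 'I_n}) b (p : 'I_n) : 0 < p ->
  psum D b p = psum D b (prev_ord p) + (b p + (p \in D)).
Proof.
move=> hp; rewrite /psum (bigD1 p) //= addnC; congr (_ + _).
apply: eq_bigl => i /=; rewrite -val_eqE /=.
case: p hp => [[|p] hp] //= _; case: i => i hi /=.
apply/idP/idP => [/andP [h1 h2]|h]; [|apply/andP; split]; lia.
Qed.

Lemma dif_psum n (D : {set 'I_n}) b p : dif D (psum D b) p = b p.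
Proof.
rewrite /dif; case: (posnP p) => [hp|hp].
  by rewrite psum0 // subn0 addnK.
by rewrite psumS // addKn addnK.
Qed.

Lemma adj_psum n (D : {set 'I_n}) b : adjD D (psum D b).
Proof.
apply/forallP => p; apply/implyP => hp; rewrite (psumS _ _ hp) leq_add2l.
exact: leq_addl.
Qed.

Lemma psum_dif n (D : {set 'I_n}) a :
  (forall i : 'I_n, i \in D -> 0 < i) -> adjD D a -> forall p, psum D (dif D a) p = a p.
Proof.
move=> hD /forallP ha p.
have [k hk] : exists k, val p = k by exists (val p).
elim: k p hk => [|k IH] p hp.
  rewrite psum0 // /dif hp /=.
  have -> : (p \in D) = false by apply/negbTE; apply/negP => /hD; rewrite hp.
  by rewrite !subn0 addn0.
have hp0 : 0 < p by rewrite hp.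
rewrite psumS // IH; last by rewrite /= hp.
rewrite /dif hp0; have := implyP (ha p) hp0.
move: (a (prev_ord p)) (a p) (p \in D : nat) => x y z h.
lia.
Qed.

Lemma le_sum (I : finType) (f : I -> nat) i : f i <= \sum_j f j.
Proof. by rewrite (bigD1 i) //= leq_addr. Qed.

Lemma count_ge n (i : 'I_n) : \sum_(p < n) (i <= p) = n - i.
Proof.
rewrite -(big_mkord xpredT (fun p => nat_of_bool (i <= p))).
rewrite (big_cat_nat (n := i)) //=; last exact: ltnW.
rewrite big_nat_cond big1 /=; last first.
  by move=> p; rewrite andbT => h; rewrite leqNgt h.
rewrite big_nat_cond (eq_bigr (fun _ => 1)); last first.
  by move=> p; rewrite andbT => /andP [-> _].
by rewrite -big_nat_cond sum_nat_const_nat muln1.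
Qed.

Lemma sum_psum n (D : {set 'I_n}) b :
  \sum_(p : 'I_n) psum D b p = \sum_(i : 'I_n) (n - i) * b i + cD D.
Proof.
rewrite /psum.
transitivity (\sum_(i < n) \sum_(p < n) (i <= p) * (b i + (i \in D))).
  rewrite exchange_big; apply: eq_bigr => p _; rewrite big_mkcond; apply: eq_bigr => i _.
  by case: (i <= p); rewrite ?mul1n ?mul0n.
rewrite (eq_bigr (fun i : 'I_n => (n - i) * b i + (n - i) * (i \in D))); last first.
  by move=> i _; rewrite -big_distrl /= count_ge mulnDr.
rewrite big_split /=; congr (_ + _).
rewrite /cD [in RHS]big_mkcond /=; apply: eq_bigr => i _.
by case: (i \in D); rewrite ?muln1 ?muln0.
Qed.

Lemma card_btrans n (D : {set 'I_n}) K : (forall i : 'I_n, i \in D -> 0 < i) ->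
 #|[pred a : {ffun 'I_n -> 'I_K.+1} | adjD D (fun j => val (a j)) && (\sum_j val (a j) == K)]| =
 #|[pred b : {ffun 'I_n -> 'I_K.+1} | \sum_(i : 'I_n) (n - i) * val (b i) + cD D == K]|.
Proof.
move=> hD.
pose Phi (b : {ffun 'I_n -> 'I_K.+1}) : {ffun 'I_n -> 'I_K.+1} :=
  [ffun p => inord (psum D (fun i => val (b i)) p)].
have bnd (b : {ffun 'I_n -> 'I_K.+1}) p :
   \sum_(i : 'I_n) (n - i) * val (b i) + cD D == K -> psum D (fun i => val (b i)) p <= K.
  move=> /eqP hb; apply: leq_trans (le_sum _ p) _; by rewrite sum_psum hb.
have PhiE (b : {ffun 'I_n -> 'I_K.+1}) :
   \sum_(i : 'I_n) (n - i) * val (b i) + cD D == K ->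
   (fun j => val (Phi b j)) = psum D (fun i => val (b i)).
  move=> hb; apply: functional_extensionality => p; rewrite ffunE /= inordK // ltnS; exact: bnd.
symmetry; rewrite -(card_in_imset (f := Phi)); last first.
  move=> b1 b2; rewrite !inE => h1 h2 H.
  have : psum D (fun i => val (b1 i)) = psum D (fun i => val (b2 i)).
    rewrite -(PhiE b1 h1) H; exact: PhiE b2 h2.
  move=> H2; apply/ffunP => i; apply: val_inj.
  have := dif_psum D (fun i => val (b1 i)) i; rewrite H2 dif_psum => ->; done.
apply: eq_card => a; rewrite inE; apply/imsetP/idP.
- case=> b; rewrite inE => hb ->.
  rewrite PhiE // adj_psum /=.
  rewrite (eq_bigr (fun j => psum D (fun i => val (b i)) j)); last first.
    by move=> j _; rewrite ffunE /= inordK // ltnS bnd.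
  by rewrite sum_psum.
- case/andP => ha /eqP hs.
  have hle i : dif D (fun j => val (a j)) i <= K.
    have := le_sum (fun j => val (a j)) i; rewrite hs /= /dif => h.
    apply: leq_trans h; rewrite -subnDA; exact: leq_subr.
  exists [ffun i => inord (dif D (fun j => val (a j)) i) : 'I_K.+1].
    rewrite inE (eq_bigr (fun i : 'I_n => (n - i) * dif D (fun j => val (a j)) i)); last first.
      by move=> i _; rewrite ffunE /= inordK // ltnS.
    rewrite -sum_psum (eq_bigr (fun p : 'I_n => val (a p))) ?hs //.
    by move=> p _; exact: psum_dif.
  have hbf : (fun i => val ([ffun i => inord (dif D (fun j => val (a j)) i) : 'I_K.+1] i)) = dif D (fun j => val (a j)).
    by apply: functional_extensionality => i; rewrite ffunE /= inordK // ltnS.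
  apply/ffunP => p; apply: val_inj; rewrite ffunE /= hbf psum_dif // inordK //; exact: ltn_ord.
Qed.

Definition PiB n B : {poly int} := (\prod_(i < n) \sum_(t < B.+1) 'X^((n - i) * t))%R.

Lemma coef_Pi n B j : ((PiB n B)`_j)%R =
  Posz (#|[pred b : {ffun 'I_n -> 'I_B.+1} | \sum_(i : 'I_n) (n - i) * val (b i) == j]|).
Proof.
rewrite /PiB bigA_distr_bigA /= coef_sum.
under eq_bigr do rewrite GRing.prodrXr coefXn.
rewrite -sum1_card -natz natr_sum [in RHS]big_mkcond /=; apply: eq_bigr => f _.
rewrite inE eq_sym; by case: (_ == _).
Qed.

Lemma Q_Pi n B : (qpoch n * PiB n B = \prod_(i < n) (1 - 'X^((n - i) * B.+1)))%R.
Proof.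
rewrite /qpoch /PiB (reindex_inj rev_ord_inj) /= -big_split /=; apply: eq_bigr => i _.
have -> : (n - i.+1).+1 = n - i by case: i => i hi /=; lia.
have := subrXX (1 : {poly int}) ('X^(n - i)) B.+1.
rewrite expr1n -exprM mulnC => ->.
congr (_ * _)%R; apply: eq_bigr => t _.
by rewrite expr1n mul1r -exprM.
Qed.

Lemma coef_prod1mX n (F : 'I_n -> nat) B j : (forall i, B < F i) -> j <= B ->
  ((\prod_(i < n) (1 - 'X^(F i)) : {poly int})`_j = (j == 0)%:R)%R.
Proof.
move=> hF; elim: j => [|j IH] hj.
Abort.

Lemma coef_prod1mX n (F : 'I_n -> nat) B : (forall i, B < F i) ->
  forall j, j <= B -> ((\prod_(i < n) (1 - 'X^(F i)) : {poly int})`_j = (j == 0)%:R)%R.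
Proof.
move=> hF; elim/big_rec: _ => [|i p _ IH] j hj; first by rewrite coef1.
rewrite mulrBl mul1r coefB coefXnM IH //.
have -> : j < F i by apply: leq_ltn_trans hj (hF i).
by rewrite subr0.
Qed.

Lemma C3 n j : (\sum_(m < j.+1) (qpoch n)`_m *
   Posz (#|[pred b : {ffun 'I_n -> 'I_(j - m).+1} | (\sum_(i : 'I_n) (n - i) * val (b i) == j - m)%N]|)
   = (j == 0)%:R)%R.
Proof.
have -> : (((j == 0)%N)%:R = (qpoch n * PiB n j)`_j :> int)%R.
  rewrite Q_Pi (coef_prod1mX (B := j)) // => i; case: i => i hi /=; nia.
rewrite coefM; apply: eq_bigr => m _; congr (_ * _)%R.
rewrite coef_Pi; congr Posz.
symmetry; apply: (card_bound1 (Q := fun g => \sum_(i : 'I_n) (n - i) * g i == j - m)).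
  exact: leq_subr.
move=> f /eqP hf i; rewrite -hf; apply: leq_trans (le_sum _ i).
case: i => i hi /=; nia.
Qed.

Definition Pc n j := #|[pred b : {ffun 'I_n -> 'I_j.+1} | (\sum_(i : 'I_n) (n - i) * val (b i) == j)%N]|.
Definition Wc n (D : {set 'I_n}) K :=
  #|[pred a : {ffun 'I_n -> 'I_K.+1} | adjD D (fun j => val (a j)) && (\sum_j val (a j) == K)%N]|.

Lemma W_eq n (D : {set 'I_n}) K : (forall i : 'I_n, i \in D -> 0 < i) ->
  Posz (Wc D K) = if cD D <= K then Posz (Pc n (K - cD D)) else 0%R.
Proof.
move=> hD; rewrite /Wc card_btrans //; case: leqP => h.
  congr Posz.
  transitivity #|[pred b : {ffun 'I_n -> 'I_K.+1} | (\sum_(i : 'I_n) (n - i) * val (b i) == K - cD D)%N]|.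
    apply: eq_card => b; rewrite !inE; apply/idP/idP => /eqP h'; apply/eqP; lia.
  apply: (card_bound1 (Q := fun g => (\sum_(i : 'I_n) (n - i) * g i == K - cD D)%N)).
    exact: leq_subr.
  move=> f /eqP hf i; rewrite -hf; apply: leq_trans (le_sum _ i).
  case: i => i hi /=; nia.
congr Posz; apply: eq_card0 => b; rewrite !inE; apply/negbTE; apply/eqP; lia.
Qed.

Lemma core n (D : {set 'I_n}) k : (forall i : 'I_n, i \in D -> 0 < i) ->
  (\sum_(m < k.+1) (qpoch n)`_m * Posz (Wc D (k - m)) = ((k == cD D)%N)%:R)%R.
Proof.
move=> hD; under eq_bigr do rewrite W_eq //.
case: (leqP (cD D) k) => hk.
  have -> : (k == cD D) = (k - cD D == 0) by apply/idP/idP => /eqP h; apply/eqP; lia.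
  rewrite -(C3 n) (big_ord_widen k.+1 (fun m => (qpoch n)`_m * Posz (Pc n (k - cD D - m)))%R); last by rewrite ltnS leq_subr.
  rewrite [in RHS]big_mkcond /=; apply: eq_bigr => m _.
  case: ifP => h1; case: ifP => h2 //.
  - have -> : k - m - cD D = k - cD D - m by lia.
    done.
  - exfalso; move: h1 h2; case: m => m hm /= h1 /negbT h2; lia.
  - exfalso; move: h1 h2; case: m => m hm /= /negbT h1 h2; lia.
  - by rewrite mulr0.
rewrite big1; last first.
  move=> m _; rewrite ifF ?mulr0 //; apply/negbTE; case: m => m hm /=; lia.
have -> : (k == cD D) = false by apply/negbTE; lia.
done.
Qed.

Lemma W_sigma n (D : {set 'I_n}) (s : {perm 'I_n}) K :
  #|[pred a : {ffun 'I_n -> 'I_K.+1} | adjD D (fun p => val (a (s p))) && (\sum_j val (a j) == K)%N]|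
  = Wc D K.
Proof.
rewrite /Wc; symmetry; rewrite (card_reindex _ (h := fun a : {ffun 'I_n -> 'I_K.+1} => [ffun p => a (s p)])).
  apply: eq_card => a; rewrite !inE.
  have -> : (fun j => val ([ffun p => a (s p)] j)) = (fun p => val (a (s p))).
    by apply: functional_extensionality => j; rewrite ffunE.
  congr (_ && (_ == _)).
  rewrite [RHS](reindex_inj (@perm_inj _ s)) /=; apply: eq_bigr => j _; by rewrite ffunE.
exists (fun a : {ffun 'I_n -> 'I_K.+1} => [ffun p => a (s^-1 p)%g]).
  by move=> a; apply/ffunP => p; rewrite !ffunE permKV.
by move=> a; apply/ffunP => p; rewrite !ffunE permK.
Qed.

Lemma sorted_perm n (s : {perm 'I_n}) (e : rel 'I_n) :
  sorted e [seq s i | i <- enum 'I_n] =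
  [forall p : 'I_n, (0 < p) ==> e (s (prev_ord p)) (s p)].
Proof.
case: n s e => [|n] s e.
  by rewrite enum_ord0 /=; apply/esym/forallP => -[].
have hn : forall i (hi : i < n.+1), nth (s ord0) [seq s i | i <- enum 'I_n.+1] i = s (Ordinal hi).
  move=> i hi; rewrite (nth_map ord0) ?size_enum_ord //; congr (s _); apply: val_inj; by rewrite /= nth_enum_ord.
apply/(sortedP (s ord0))/forallP => [H p|H i].
  apply/implyP => hp.
  have hp1 : p.-1 < n.+1 by case: p hp => p hp /=; lia.
  have := H p.-1; rewrite size_map size_enum_ord prednK // ltn_ord => /(_ isT).
  rewrite (hn _ hp1) (hn _ (ltn_ord p)).
  have -> : Ordinal hp1 = prev_ord p by apply: val_inj.
  have -> : Ordinal (ltn_ord p) = p by apply: val_inj.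
  done.
rewrite size_map size_enum_ord => hi.
have hi' : i < n.+1 by apply: ltnW.
rewrite (hn _ hi') (hn _ hi).
have := implyP (H (Ordinal hi)) isT.
have -> : prev_ord (Ordinal hi) = Ordinal hi' by apply: val_inj.
done.
Qed.

Lemma lexlt_irr s : lexlt s s = false.
Proof. by elim: s => //= x s ->; rewrite ltnn andbF. Qed.

Lemma rb_split n (R : {set 'I_n}) (x : 'I_n -> nat) (T : 'I_n -> seq nat) r' (a b : 'I_n) :
  (forall j, size (T j) = r') -> a != b ->
  read_before R (fun j => x j :: T j) a b =
  (x a < x b) || (x a == x b) && ~~ (lexlt (T b) (T a) || (T a == T b) &&
     (((b < a) && ~~ simR R a.+1 b.+1) || ((a < b) && simR R a.+1 b.+1))).
Proof.
move=> hT hab; rewrite /read_before /= eqseq_cons (lexlt_total (s := T a)); last by rewrite !hT.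
case: (ltngtP a b) => h; last by move: hab; rewrite -val_eqE /= h eqxx.
- case: (T a =P T b) => [->|_].
    by rewrite lexlt_irr; case: (simR R a.+1 b.+1); rewrite /= ?andbF ?andbT ?orbF.
  by case: (lexlt (T b) (T a)); case: (simR R a.+1 b.+1); rewrite /= ?andbF ?andbT ?orbF.
- case: (T a =P T b) => [->|_].
    by rewrite lexlt_irr; case: (simR R a.+1 b.+1); rewrite /= ?andbF ?andbT ?orbF.
  by case: (lexlt (T b) (T a)); case: (simR R a.+1 b.+1); rewrite /= ?andbF ?andbT ?orbF.
Qed.

Lemma reading_split n (R D : {set 'I_n}) (s : {perm 'I_n}) (x : 'I_n -> nat) (T : 'I_n -> seq nat) r' :
  (forall j, size (T j) = r') ->
  reading_perm_is R (fun j => x j :: T j) s && (Des R T s == D) =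
  adjD D (fun p => x (s p)) && (Des R T s == D).
Proof.
move=> hT; case hDes: (Des R T s == D); rewrite ?andbF ?andbT //.
move/eqP: hDes => <-.
rewrite /reading_perm_is sorted_perm /adjD; apply: eq_forallb => p.
case: (posnP p) => hp //=.
rewrite (rb_split _ _ hT); last first.
  rewrite (inj_eq perm_inj) -val_eqE /=; case: p hp => p hp /= h; lia.
rewrite inE hp /=.
case: (lexlt _ _ || _); rewrite /= ?addn0 ?addn1; apply/idP/idP; lia.
Qed.

Lemma wtS r' n (x : 'I_n -> nat) (T : 'I_n -> seq nat) v : v < r' ->
  wt r'.+1 (fun j => x j :: T j) v.+1 = wt r' T v.+1.
Proof.
move=> hv; rewrite /wt.
have -> : (1 <= v.+1 <= r'.+1) = true by apply/idP; lia.
have -> : (1 <= v.+1 <= r') = true by apply/idP; lia.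
have -> : r'.+1 - v.+1 = (r' - v.+1).+1 by lia.
done.
Qed.

Lemma wtN r' n (x : 'I_n -> nat) (T : 'I_n -> seq nat) :
  wt r'.+1 (fun j => x j :: T j) r'.+1 = \sum_j x j.
Proof. by rewrite /wt leqnn subnn. Qed.

Lemma wt0 r' n (T : 'I_n -> seq nat) : wt r' T r'.+1 = 0.
Proof. by rewrite /wt ltnn andbF. Qed.

Lemma forall_split r' (F : nat -> bool) :
  [forall v : 'I_r'.+1, F v] = [forall v : 'I_r', F v] && F r'.
Proof.
apply/forallP/andP => [H|[/forallP H1 H2] v].
  split; last exact: (H ord_max).
  by apply/forallP => v; exact: (H (widen_ord (leqnSn _) v)).
case: (ltnP v r') => hv; first exact: (H1 (Ordinal hv)).
have -> : nat_of_ord v = r' by case: v hv => v hv /= h; lia.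
done.
Qed.

Lemma wt_split r' n (x : 'I_n -> nat) (T : 'I_n -> seq nat) e c :
 [forall v : 'I_r'.+1, wt r'.+1 (fun j => x j :: T j) v.+1 == upd e r'.+1 c v.+1]
 = [forall v : 'I_r', wt r' T v.+1 == e v.+1] && (\sum_j x j == c).
Proof.
rewrite (@forall_split r' (fun v => wt r'.+1 (fun j => x j :: T j) v.+1 == upd e r'.+1 c v.+1)).
rewrite wtN /upd eqxx; congr (_ && _); apply: eq_forallb => v.
rewrite wtS // ifN //; case: v => v hv /=; lia.
Qed.

Lemma wt_split0 r' n (T : 'I_n -> seq nat) e c :
 [forall v : 'I_r'.+1, wt r' T v.+1 == upd e r'.+1 c v.+1]
 = [forall v : 'I_r', wt r' T v.+1 == e v.+1] && (c == 0).
Proof.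
rewrite (@forall_split r' (fun v => wt r' T v.+1 == upd e r'.+1 c v.+1)).
rewrite wt0 /upd eqxx eq_sym; congr (_ && _); apply: eq_forallb => v.
rewrite ifN //; case: v => v hv /=; lia.
Qed.

Lemma bsum r' (e : nat -> nat) c :
  \sum_(1 <= v < r'.+2) upd e r'.+1 c v = \sum_(1 <= v < r'.+1) e v + c.
Proof.
rewrite big_nat_recr //= /upd eqxx; congr (_ + _).
apply: eq_big_nat => v /andP [_ hv]; rewrite ifN //; lia.
Qed.

Lemma e_le (e : nat -> nat) N v : 1 <= v < N -> e v <= \sum_(1 <= u < N) e u.
Proof.
elim: N => [|N IH] hv; first lia.
rewrite big_nat_recr /=; last lia.
case: (v =P N) => [->|hne]; first exact: leq_addl.
apply: leq_trans (IH _) (leq_addr _ _); lia.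
Qed.

Lemma andb4 (a b c d : bool) : [&& a && b, c & d] = (a && d) && (b && c).
Proof. by case: a; case: b; case: c; case: d. Qed.

Theorem proposition4 (n r : nat) (R D : {set 'I_n}) (sigma : {perm 'I_n}) :
  (1 <= n)%N -> (1 <= r)%N ->
  (forall i : 'I_n, i \in R -> (0 < i)%N) ->
  (forall i : 'I_n, i \in D -> (0 < i)%N) ->
  forall e : nat -> nat,
    mul_poly_var r (qpoch n)
      (gf r r (fun Z => reading_perm_is R Z sigma && (Des R (Zdrop2 Z) sigma == D))) e
    =
    mul_mono_var r (cD D)
      (gf r (r - 1) (fun S => Des R S sigma == D)) e.
Proof.
move=> hn hr hR hD e.
case: r hr => [//|r'] _.
rewrite (_ : r'.+1 - 1 = r'); last by rewrite subn1.
set k := e r'.+1.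
set M := \sum_(1 <= v < r'.+1) e v.
pose Qe (F : 'I_n -> 'I_r' -> nat) :=
  (Des R (fun j => [seq F j i | i <- enum 'I_r']) sigma == D) &&
  [forall v : 'I_r', wt r' (fun j => [seq F j i | i <- enum 'I_r']) v.+1 == e v.+1].
pose h := #|[pred f : {ffun 'I_n -> {ffun 'I_r' -> 'I_M.+1}} | Qe (fun i j => val (f i j))]|.
have hT c : #|[pred f : {ffun 'I_n -> {ffun 'I_r' -> 'I_(M + c).+1}} | Qe (fun i j => val (f i j))]| = h.
  apply: card_bound2; first exact: leq_addr.
  move=> f /andP [_ /forallP H] i j.
  have hv : r' - j.+1 < r' by case: j => j hj /=; lia.
  have := H (Ordinal hv); rewrite /wt /=.
  rewrite hv.
  have -> : r' - (r' - j.+1).+1 = j by case: j {hv} => j hj /=; lia.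
  move=> /eqP hs.
  have hle : val (f i j) <= e (r' - j.+1).+1.
    rewrite -hs; apply: leq_trans (le_sum _ i).
    rewrite (nth_map j) ?size_enum_ord //; by rewrite nth_ord_enum.
  apply: leq_trans hle _; apply: e_le; lia.
have hRHS : mul_mono_var r'.+1 (cD D) (gf r'.+1 r' (fun S => Des R S sigma == D)) e
   = if cD D <= k then Posz (if k - cD D == 0 then h else 0) else 0%R.
  rewrite /mul_mono_var -/k; case: ifP => // _.
  rewrite /gf; cbv zeta; rewrite bsum -/M.
  case: eqP => hc.
    rewrite hc addn0; congr Posz; apply: eq_card => f; rewrite !inE wt_split0 andbT.
    done.
  congr Posz; apply: eq_card0 => f; rewrite !inE wt_split0.
  by move/eqP: hc => /negbTE hc; rewrite hc !andbF.
have hL c : gf r'.+1 r'.+1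
      (fun Z => reading_perm_is R Z sigma && (Des R (Zdrop2 Z) sigma == D)) (upd e r'.+1 c)
      = Posz (Wc D c * h).
  rewrite /gf; cbv zeta; rewrite bsum -/M.
  rewrite (@card_split n r' _ (fun Zn => (reading_perm_is R Zn sigma && (Des R (Zdrop2 Zn) sigma == D))
       && [forall v : 'I_r'.+1, wt r'.+1 Zn v.+1 == upd e r'.+1 c v.+1])).
  rewrite (eq_card (B := [predX [pred a : {ffun 'I_n -> 'I_(M + c).+1} |
        adjD D (fun p => val (a (sigma p))) && (\sum_j val (a j) == c)]
      & [pred T : {ffun 'I_n -> {ffun 'I_r' -> 'I_(M + c).+1}} | Qe (fun i j => val (T i j))]])).
    rewrite cardX hT; congr Posz; congr (_ * _).
    rewrite (card_bound1 (Q := fun g => adjD D (fun p => g (sigma p)) && (\sum_j g j == c)) (M := c)).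
    - exact: W_sigma.
    - exact: leq_addl.
    - by move=> f /andP [_ /eqP hs] i; have := le_sum (fun j => val (f j)) i; rewrite hs.
  move=> [a T]; rewrite !inE /=.
  rewrite wt_split (@reading_split n R D sigma _ _ r'); last by move=> j; rewrite size_map size_enum_ord.
  by rewrite /Qe andb4.
rewrite hRHS /mul_poly_var -/k.
under eq_bigr => m _ do rewrite hL PoszM mulrA.
rewrite -big_distrl /= core //.
case: (leqP (cD D) k) => hk.
  have -> : (k - cD D == 0) = (k == cD D) by apply/idP/idP => /eqP H; apply/eqP; lia.
  by case: (k == cD D); rewrite ?mul1r ?mul0r.
have -> : (k == cD D) = false by apply/negbTE; lia.
by rewrite mul0r.
Qed.
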